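(* Let $\Delta\ge2$ and let $G$ be a connected graph on $n$ vertices in which every vertex has degree $\Delta$, except possibly one vertex of degree $\Delta-1$. If $n\ge 2\Delta+1$, then $G$ contains a path on $2\Delta+1$ vertices. *)

(* Defs.v *)
From mathcomp Require Import all_boot.
Set Implicit Arguments. Unset Strict Implicit. Unset Printing Implicit Defensive.

Definition simple_graph (T : finType) (e : rel T) : Prop :=
  symmetric e /\ irreflexive e.

Definition deg (T : finType) (e : rel T) (x : T) : nat := #|[set y | e x y]|.

Definition connected_graph (T : finType) (e : rel T) : Prop :=
  forall x y : T, connect e x y.

Definition has_path_on (T : finType) (e : rel T) (k : nat) : Prop :=
  exists (x : T) (p : seq T), path e x p /\ uniq (x :: p) /\ size (x :: p) = k.

(* Main.v *)
Require Import Defs.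
From mathcomp Require Import all_boot zify.

Ltac slia := repeat match goal with H : context[size _] |- _ => revert H end;
  repeat (match goal with |- context[size ?x] => let n := fresh "n" in set n := size x; clearbody n end);
  intros; lia.

Section G.
Variables (T : finType) (e : rel T).
Hypothesis esym : symmetric e.
Hypothesis eirr : irreflexive e.

Definition spath (s : seq T) := sorted e s && uniq s.

Lemma sorted_rev s : sorted e (rev s) = sorted e s.
Proof. rewrite rev_sorted; case: s => //= x p; apply: eq_path => a b; exact: esym. Qed.

Lemma sorted_cat2 x0 s1 s2 : s1 != [::] -> s2 != [::] ->
  sorted e (s1 ++ s2) = [&& sorted e s1, e (last x0 s1) (head x0 s2) & sorted e s2].
Proof. by case: s1 => // a s1; case: s2 => // b s2 _ _ /=; rewrite cat_path /=. Qed.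

Lemma cycleE x0 c : c != [::] -> cycle e c = sorted e c && e (last x0 c) (nth x0 c 0).
Proof. by case: c => // a c _ /=; rewrite rcons_path. Qed.

Lemma flip x0 s j : 0 < j < size s -> e (nth x0 s 0) (nth x0 s j) -> spath s ->
  let t := rev (take j s) ++ drop j s in
  [/\ spath t, size t = size s, t =i s, nth x0 t 0 = nth x0 s j.-1 & last x0 t = last x0 s].
Proof.
move=> /andP[j0 js] ex /andP[so un] t.
have tk0 : take j s != [::] by rewrite -size_eq0 size_take js; apply/eqP; slia.
have dr0 : drop j s != [::].
 rewrite -size_eq0 size_drop; apply/eqP. slia.
have rtk0 : rev (take j s) != [::] by rewrite -size_eq0 size_rev size_take js; apply/eqP; slia.
have stk : size (take j s) = j by rewrite size_take js.
have lastr : last x0 (rev (take j s)) = nth x0 s 0.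
  rewrite -nth_last size_rev nth_rev stk; last slia.
  by rewrite nth_take; [congr nth; slia | slia].
have headd : head x0 (drop j s) = nth x0 s j by rewrite -nth0 nth_drop addn0.
move: so; rewrite -{1}(cat_take_drop j s) (sorted_cat2 x0) // => /and3P[s1 _ s2].
split.
- rewrite /spath (sorted_cat2 x0) // sorted_rev s1 s2 lastr headd ex /=.
  rewrite cat_uniq rev_uniq.
  have -> : has (mem (rev (take j s))) (drop j s) = has (mem (take j s)) (drop j s).
    by apply: eq_has => y /=; rewrite mem_rev.
  by rewrite -cat_uniq cat_take_drop.
- by rewrite size_cat size_rev -size_cat cat_take_drop.
- by move=> y; rewrite mem_cat mem_rev -mem_cat cat_take_drop.
- rewrite nth_cat size_rev stk j0 nth_rev stk; last slia.
  by rewrite nth_take; [congr nth; slia | slia].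
- have e1 : last x0 s = last (last x0 (take j s)) (drop j s) by rewrite -last_cat cat_take_drop.
  by rewrite /t last_cat e1; case: (drop j s) dr0.
Qed.

Lemma cyc_ext x0 v c : cycle e c -> uniq c -> c != [::] -> e v (nth x0 c 0) -> v \notin c ->
  spath (v :: c).
Proof.
case: c => // a q /=; rewrite rcons_path => /andP[pq _] uq _ va vn.
by rewrite /spath /= va pq /= vn uq.
Qed.

Hypothesis conn : connected_graph e.

Lemma close x0 s : spath s -> 0 < size s < #|T| ->
  (forall y, e (nth x0 s 0) y -> y \in s) -> (forall y, e (last x0 s) y -> y \in s) ->
  size s <= deg e (nth x0 s 0) + deg e (last x0 s) ->
  exists t, spath t /\ size t = (size s).+1.
Proof.
move=> sp /andP[s0 sT] Nx Nz dsum.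
have [so un] := andP sp.
pose m := (size s).-1.
have sm : size s = m.+1 by rewrite /m prednK.
have zE : last x0 s = nth x0 s m by rewrite -nth_last.
pose A := [set i : 'I_m | e (nth x0 s 0) (nth x0 s i.+1)].
pose B := [set i : 'I_m | e (nth x0 s i) (last x0 s)].
have dA : deg e (nth x0 s 0) <= #|A|.
  apply: leq_trans (leq_imset_card (fun i : 'I_m => nth x0 s i.+1) A).
  apply: subset_leq_card; apply/subsetP => y; rewrite inE => exy.
  have ys := Nx y exy.
  have ki : index y s < size s by rewrite index_mem.
  have k0 : index y s != 0.
    apply: contraTneq exy => k0.
    by rewrite -(nth_index x0 ys) k0 eirr.
  have km : (index y s).-1 < m by slia.
  apply/imsetP; exists (Ordinal km); last by rewrite /= prednK ?lt0n // nth_index.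
  by rewrite inE /= prednK ?lt0n // nth_index.
have dB : deg e (last x0 s) <= #|B|.
  apply: leq_trans (leq_imset_card (fun i : 'I_m => nth x0 s i) B).
  apply: subset_leq_card; apply/subsetP => y; rewrite inE => exy.
  have ys := Nz y exy.
  have ki : index y s < size s by rewrite index_mem.
  have k0 : index y s != m.
    apply: contraTneq exy => k0.
    by rewrite -(nth_index x0 ys) k0 -zE eirr.
  have km : index y s < m by slia.
  apply/imsetP; exists (Ordinal km); last by rewrite /= nth_index.
  by rewrite inE /= nth_index // esym.
have : 0 < #|A :&: B|.
  have := cardsUI A B; have := max_card (A :|: B); rewrite card_ord; slia.
case/card_gt0P => i; rewrite inE => /andP[]; rewrite !inE => exi eiz.
have ij : 0 < i.+1 < size s by rewrite sm /= ltnS ltn_ord.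
pose c := rev (take i.+1 s) ++ drop i.+1 s.
have [sp' sz' mem' h0 hl] : [/\ spath c, size c = size s, c =i s,
   nth x0 c 0 = nth x0 s i.+1.-1 & last x0 c = last x0 s] := flip x0 s (i.+1) ij exi sp.
have c0 : c != [::] by rewrite -size_eq0 sz' sm.
have cyc : cycle e c by rewrite (cycleE x0) // hl h0 /= esym eiz andbT; case/andP: sp'.
have [w ws] : exists w, w \notin s.
  case: (pickP (fun w => w \notin s)) => [w ws|all]; first by exists w.
  exfalso.
  have : #|T| <= size s.
    rewrite cardT; apply: uniq_leq_size (enum_uniq T) _ => y _.
    by move: (all y) => /= /negbFE.
  slia.
have [u [v [uv [us vs]]]] : exists u v, [/\ e u v, u \in s & v \notin s].
  case: (boolP [exists u, exists v, [&& e u v, u \in s & v \notin s]]).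
  - by case/existsP => u /existsP[v /and3P[? ? ?]]; exists u, v.
  - move=> nex; exfalso.
    have cl : closed e s.
      move=> a b eab; apply/idP/idP => H; apply/negPn/negP => H'.
      + apply: (negP nex); apply/existsP; exists a; apply/existsP; exists b.
        by rewrite eab H H'.
      + apply: (negP nex); apply/existsP; exists b; apply/existsP; exists a.
        by rewrite esym eab H H'.
    have := closed_connect cl (conn (nth x0 s 0) w).
    by rewrite mem_nth // (negbTE ws).
have uc : u \in c by rewrite mem'.
pose c' := rot (index u c) c.
have c'0 : nth x0 c' 0 = u.
  rewrite /c' /rot nth_cat size_drop subn_gt0 index_mem uc nth_drop addn0.
  exact: nth_index.
exists (v :: c'); split; last by rewrite /= size_rot sz'.
apply: (cyc_ext x0).
- by rewrite rot_cycle.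
- by rewrite rot_uniq; case/andP: sp'.
- by rewrite -size_eq0 size_rot sz' sm.
- by rewrite c'0 esym.
- by rewrite mem_rot mem'.
Qed.

Lemma prepend x0 s y : spath s -> 0 < size s -> e (nth x0 s 0) y -> y \notin s -> spath (y :: s).
Proof.
by case: s => // a p /andP[/= so un] _ /= xy ys; rewrite /spath /= esym xy so ys un.
Qed.

Lemma ext2 x0 s : spath s -> 0 < size s < #|T| ->
  size s <= deg e (nth x0 s 0) + deg e (last x0 s) ->
  exists t, spath t /\ size t = (size s).+1.
Proof.
move=> sp /andP[s0 sT] dsum.
case: (pickP (fun y => e (nth x0 s 0) y && (y \notin s))) => [y /andP[xy ys]|Nx].
  by exists (y :: s); split => //; apply: (prepend x0).
case: (pickP (fun y => e (last x0 s) y && (y \notin s))) => [y /andP[zy ys]|Nz].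
  exists (rcons s y); split; last by rewrite size_rcons.
  move: sp s0 zy ys; clear; case: s => // a p /andP[/= so un] _ /= zy ys.
  rewrite /spath -rcons_cons rcons_uniq ys /= rcons_path so zy /=; exact: un.
apply: (close x0 s sp) => //; first by rewrite s0.
- move=> y xy; apply/negPn/negP => yn; move: (Nx y) => /=; by rewrite xy yn.
- move=> y zy; apply/negPn/negP => yn; move: (Nz y) => /=; by rewrite zy yn.
Qed.

Lemma handshake : ~~ odd (\sum_x deg e x).
Proof.
pose r := @enum_rank T.
pose a x y := nat_of_bool (e x y && (r x < r y)).
have degE x : deg e x = \sum_y (a x y + a y x).
  rewrite /deg -sum1_card big_mkcond /=; apply: eq_bigr => y _; rewrite inE /a.
  case exy: (e x y); rewrite esym exy //=.
  have nxy : x != y by apply: contraTneq exy => ->; rewrite eirr.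
  have : (r x : nat) != r y by rewrite (inj_eq (@ord_inj _)) (inj_eq enum_rank_inj).
  by case: ltngtP.
rewrite (eq_bigr _ (fun x _ => degE x)).
under eq_bigr => x _ do rewrite big_split.
by rewrite big_split /= [X in _ + X]exchange_big /= addnn odd_double.
Qed.

Lemma no_bad2 v0 : (forall x, x != v0 -> deg e x = 2) -> deg e v0 = 1 -> False.
Proof.
move=> H1 H2; have := handshake; rewrite (bigD1 v0) //= H2.
rewrite (eq_bigr (fun _ => 2)); last by move=> x /H1.
by rewrite sum_nat_const oddD oddM andbF.
Qed.

Variables (D : nat) (v0 : T).
Hypothesis D2 : 2 <= D.
Hypothesis degv : forall x, x != v0 -> deg e x = D.
Hypothesis dv0 : deg e v0 = D \/ deg e v0 = D.-1.
Hypothesis bigT : 2 * D + 1 <= #|T|.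

Lemma dv0ge : D.-1 <= deg e v0.
Proof. by case: dv0 => ->; slia. Qed.

Lemma bad x0 s : spath s -> size s = 2 * D -> nth x0 s 0 = v0 -> 3 <= D ->
  exists t, spath t /\ size t = (size s).+1.
Proof.
move=> sp ss x0v D3.
have s0 : 0 < size s by rewrite ss; slia.
have sT : size s < #|T| by rewrite ss; slia.
have [so un] := andP sp.
case: (pickP (fun y => e v0 y && (y \notin s))) => [y /andP[xy ys]|Nx].
  by exists (y :: s); split => //; apply: (prepend x0) => //; rewrite x0v.
have Nx' y : e v0 y -> y \in s.
  by move=> vy; apply/negPn/negP => yn; move: (Nx y) => /=; rewrite vy yn.
have dge : 2 <= #|[set y | e v0 y]| by move: dv0ge; rewrite /deg; slia.
pose x1 := nth x0 s 1.
have : 0 < #|[set y | e v0 y] :\ x1|.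
  have := cardsD1 x1 [set y | e v0 y]; have := leq_b1 (x1 \in [set y | e v0 y]); slia.
case/card_gt0P => y; rewrite !inE => /andP[yx1 vy].
have ys := Nx' y vy.
pose j := index y s.
have js : j < size s by rewrite index_mem.
have yj : nth x0 s j = y by rewrite nth_index.
have j0 : j != 0 by apply: contraTneq vy => j0; rewrite -yj j0 x0v eirr.
have j1 : j != 1 by apply: contraNneq yx1 => j1; rewrite -yj j1 /x1 eqxx.
have jj : 0 < j < size s by rewrite lt0n j0 js.
have [sp' sz' _ h0 hl] : [/\ spath (rev (take j s) ++ drop j s),
   size (rev (take j s) ++ drop j s) = size s, (rev (take j s) ++ drop j s) =i s,
   nth x0 (rev (take j s) ++ drop j s) 0 = nth x0 s j.-1 &
   last x0 (rev (take j s) ++ drop j s) = last x0 s].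
  by apply: (flip x0 s j jj) => //; rewrite x0v yj.
have [t [tp ts]] : exists t, spath t /\ size t = (size (rev (take j s) ++ drop j s)).+1.
  apply: (ext2 x0) => //; first by rewrite sz' s0 sT.
  rewrite h0 hl !degv ?sz' ?ss //; first by slia.
  - by rewrite -x0v -nth_last nth_uniq //; slia.
  - by rewrite -x0v nth_uniq //; slia.
by exists t; rewrite ts sz'.
Qed.

Lemma aux n : D + deg e v0 < n -> n <= 2 * D -> (D = 2 -> deg e v0 = D) -> 3 <= D /\ n = 2 * D.
Proof.
move=> H nD nb; case: dv0 => dv; move: H; rewrite dv; first by slia.
move=> H; split; last by slia.
case: (ltnP 2 D) => // DL; have D2' : D = 2 by slia.
by move: (nb D2'); rewrite dv; slia.
Qed.

Lemma extend (x0 : T) s : (D = 2 -> deg e v0 = D) -> spath s -> 0 < size s <= 2 * D ->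
  exists t, spath t /\ size t = (size s).+1.
Proof.
move=> nb sp /andP[s0 sD].
have sT : size s < #|T| by slia.
have dge y : D.-1 <= deg e y by case: (eqVneq y v0) => [->|/degv ->]; [exact: dv0ge | slia].
case: (leqP (size s) (deg e (nth x0 s 0) + deg e (last x0 s))) => [H|H].
  by apply: (ext2 x0) => //; rewrite s0.
have s1 : 1 < size s.
  rewrite ltn_neqAle eq_sym s0 andbT; apply: contraTneq H => s1.
  rewrite -nth_last s1 /= -leqNgt; have := dge (nth x0 s 0); slia.
have xz : nth x0 s 0 != last x0 s by rewrite -nth_last nth_uniq //; [slia|slia| case/andP: sp].
case: (eqVneq (nth x0 s 0) v0) => [xv|xv].
- have zv : last x0 s != v0 by rewrite -xv eq_sym.
  move: H; rewrite xv (degv _ zv) addnC => H.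
  have [D3 ss] := aux _ H sD nb.
  exact: (bad x0).
- case: (eqVneq (last x0 s) v0) => [zv|zv]; last first.
    by move: H; rewrite (degv _ xv) (degv _ zv); slia.
  have sp' : spath (rev s) by rewrite /spath sorted_rev rev_uniq.
  have h0 : nth x0 (rev s) 0 = v0 by rewrite nth_rev // subn1 nth_last.
  move: H; rewrite zv (degv _ xv) => H.
  have [D3 ss] := aux _ H sD nb.
  have [t [tp ts]] := bad x0 (rev s) sp' (etrans (size_rev s) ss) h0 D3.
  by exists t; rewrite ts size_rev.
Qed.
End G.


Theorem lemma3p2 (T : finType) (e : rel T) (D : nat) :
  simple_graph e -> connected_graph e -> 2 <= D ->
  (exists v0 : T, (forall x, x != v0 -> deg e x = D) /\
                  (deg e v0 = D \/ deg e v0 = D.-1)) ->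
  2 * D + 1 <= #|T| ->
  has_path_on e (2 * D + 1).
Proof.
move=> [esym eirr] conn D2 [v0 [degv dv0]] bigT.
have nb : D = 2 -> deg e v0 = D.
  move=> D2'; case: dv0 => // dv; exfalso.
  apply: (@no_bad2 T e esym eirr v0).
  - by move=> x /degv; rewrite D2'.
  - by rewrite dv D2'.
have main k : k <= 2 * D + 1 -> exists s, spath T e s /\ size s = k.
  elim: k => [|k IH] kb; first by exists [::].
  have [s [sp ss]] := IH (ltnW kb).
  case: (posnP k) => [k0|kp].
    by exists [:: v0]; rewrite k0.
  have sc : 0 < size s <= 2 * D by rewrite ss kp /=; slia.
  have [t [tp ts]] := @extend T e esym eirr conn D v0 D2 degv dv0 bigT v0 s nb sp sc.
  by exists t; rewrite ts ss.
have [s [sp ss]] := main _ (leqnn _).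
case: s sp ss => [_ /eqP|x p /andP[so un] ss]; first by rewrite addn1.
by exists x, p; split; [exact: so | split; [exact: un | exact: ss]].
Qed.
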